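(* Let $p(x,y)$ be a real polynomial with $p(0,0)=0$, $\nabla p(0,0)=(0,0)$, $\dim\operatorname{Co}N_p=2$, such that for every $A\in\mathbb{N}^2$ the main $A$-quasi-homogeneous form of $p$ is nonnegative on $\mathbb{R}^2$. Let $A=(A_1,A_2)\in\mathcal{A}_p$ with $g_2^A(u_0)\neq0$ for all $u_0\in U_p(A)$, and let $x^{\chi_1}y^{\eta_1}$ be the monomial of the main term of $\varphi_2^A$. Then the following are equivalent: (i) for all $(x,y)$ with $\varphi_1^A(x,y)=0$, $x\neq0$, $y\neq0$ one has $\varphi_2^A(x,y)>0$; (ii) for every $u_0\in U_p(A)$ the system $x\neq0$, $y\neq0$, $x^{-A_2}y^{A_1}=u_0$, $x^{\chi_1}y^{\eta_1}g_2^A(u_0)<0$ has no real solution.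
   Context: $\mathbb{N}=\{1,2,\dots\}$; $\mathbb{N}_0^2$ is the set of $(A_1,A_2)\in\mathbb{N}^2$ with $\gcd(A_1,A_2)=1$. $N_p$ is the support of $p$ and $\operatorname{Co}N_p$ its convex hull. For $A\in\mathbb{N}^2$ the main $A$-quasi-homogeneous form of $p$ is the sum of the terms of $p$ whose exponent vectors $k$ minimize $\langle A,k\rangle$ over $N_p$. For $A\in\mathbb{N}_0^2$, with $B_1^A<B_2^A<\dots$ the distinct values of $\langle A,k\rangle$ on $N_p$, $\varphi_i^A$ is the sum of terms of $p$ with $\langle A,k\rangle=B_i^A$. For such a form $\sum_i c_ix^{\gamma_i}y^{\delta_i}$ ($c_i\ne0$, $\gamma_1>\gamma_2>\dots$), its main term is $c_1x^{\gamma_1}y^{\delta_1}$ and its characteristic polynomial is $\sum_ic_iu^{(\gamma_1-\gamma_i)/A_2}$; $g_1^A,g_2^A$ are those of $\varphi_1^A,\varphi_2^A$. $\mathcal{A}_p$ is the set of $A\in\mathbb{N}_0^2$ such that $\varphi_1^A$ has at least three terms, $g_1^A\ge0$ on $\mathbb{R}$, and $g_1^A$ has a real root; $U_p(A)$ is the set of real roots of $g_1^A$. *)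

(* Defs.v *)
(* A bivariate real polynomial p(x,y) is represented as
   p : {poly {poly R}}, a polynomial in y whose coefficients are polynomials
   in x: the coefficient of x^i y^j is  p`_j`_i . *)
From HB Require Import structures.
From mathcomp Require Import all_boot all_order all_algebra.
From mathcomp Require Import reals.
Set Implicit Arguments. Unset Strict Implicit. Unset Printing Implicit Defensive.
Import Order.TTheory GRing.Theory Num.Theory.
Local Open Scope ring_scope.

Section Bivariate.
Variable R : realType.
Implicit Types (f p : {poly {poly R}}).

Definition coef2 f (i j : nat) : R := f`_j`_i.

Definition eval2 f (x y : R) : R := (map_poly (fun q : {poly R} => q.[x]) f).[y].

Definition supp2 f : seq (nat * nat) :=
  flatten [seq [seq (i, j) | i <- iota 0 (size f`_j) & f`_j`_i != 0]
          | j <- iota 0 (size f)].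

Definition nterms f : nat := (\sum_(q <- f) count (fun c : R => c != 0%R) (polyseq q))%N.

(* dim Co N_f = 2 : N_f contains three affinely independent points *)
Definition hull_dim2 f : Prop :=
  exists k1 k2 k3, [/\ k1 \in supp2 f, k2 \in supp2 f, k3 \in supp2 f &
    ((k2.1%:Z - k1.1%:Z) * (k3.2%:Z - k1.2%:Z)
       - (k2.2%:Z - k1.2%:Z) * (k3.1%:Z - k1.1%:Z) != 0)%R].

Definition wdeg (A1 A2 : nat) (k : nat * nat) : nat := (A1 * k.1 + A2 * k.2)%N.

Definition qform f (A1 A2 B : nat) : {poly {poly R}} :=
  \poly_(j < size f) \poly_(i < size f`_j)
     (if wdeg A1 A2 (i, j) == B then f`_j`_i else 0).

Definition levels f (A1 A2 : nat) : seq nat :=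
  sort leq (undup [seq wdeg A1 A2 k | k <- supp2 f]).

(* B_i^A (1-indexed) and phi_i^A *)
Definition Blev f (A1 A2 : nat) (i : nat) : nat := nth 0%N (levels f A1 A2) i.-1.
Definition phi f (A1 A2 : nat) (i : nat) := qform f A1 A2 (Blev f A1 A2 i).

Definition mainform f (A1 A2 : nat) := phi f A1 A2 1.

(* for a form f = sum c_i x^gamma_i y^delta_i: gamma_1 (largest x-exponent),
   the y-exponent of the main term, and the characteristic polynomial *)
Definition gamma1 f : nat := \max_(k <- supp2 f) k.1.
Definition eta1 f : nat :=
  \max_(k <- supp2 f | k.1 == gamma1 f) k.2.
Definition charpoly f (A2 : nat) : {poly R} :=
  \sum_(k <- supp2 f) f`_k.2`_k.1 *: 'X^((gamma1 f - k.1) %/ A2).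

Definition gA f (A1 A2 : nat) (i : nat) : {poly R} := charpoly (phi f A1 A2 i) A2.

Definition N02 (A1 A2 : nat) : bool := [&& (0 < A1)%N, (0 < A2)%N & coprime A1 A2].

Definition inAp p (A1 A2 : nat) : Prop :=
  [/\ N02 A1 A2, (3 <= nterms (phi p A1 A2 1))%N,
      (forall u : R, 0 <= (gA p A1 A2 1).[u]) &
      exists u : R, root (gA p A1 A2 1) u].

Definition Up p (A1 A2 : nat) (u : R) : bool := root (gA p A1 A2 1) u.

End Bivariate.

(* Main.v *)
Require Import Defs.
From HB Require Import structures.
From mathcomp Require Import all_boot all_order all_algebra.
From mathcomp Require Import reals.
From mathcomp Require Import zify ring.
Set Implicit Arguments. Unset Strict Implicit. Unset Printing Implicit Defensive.
Import Order.TTheory GRing.Theory Num.Theory.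
Local Open Scope ring_scope.

Section S.
Variable R : realType.
Implicit Types f : {poly {poly R}}.

Lemma eval2_supp f x y : eval2 f x y =
  \sum_(k <- supp2 f) f`_k.2`_k.1 * (x ^+ k.1 * y ^+ k.2).
Proof.
rewrite /eval2 /supp2 big_flatten /= big_map.
rewrite (@horner_coef_wide _ (size f)); last first.
  rewrite size_poly //.
rewrite -(subn0 (size f)) -/(index_iota 0 (size f)) big_mkord subn0.
apply: eq_bigr => j _.
rewrite coef_map_id0 ?horner0 // big_map big_filter.
rewrite (horner_coef_wide _ (leqnn (size f`_j))).
rewrite -(subn0 (size f`_j)) -/(index_iota 0 (size f`_j)) big_mkord subn0 mulr_suml.
rewrite [RHS]big_mkcond /=; apply: eq_bigr => i _.
by case: eqP => [->|_]; rewrite ?mul0r // mulrA.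
Qed.


Lemma supp_nz f k : k \in supp2 f -> f`_k.2`_k.1 != 0.
Proof.
move/flattenP=> [s /mapP [j _ ->]] /mapP [i].
by rewrite mem_filter => /andP [nz _] ->.
Qed.

Lemma charpoly_eval f A2 u : (charpoly f A2).[u] =
  \sum_(k <- supp2 f) f`_k.2`_k.1 * u ^+ ((gamma1 f - k.1) %/ A2).
Proof.
rewrite /charpoly horner_sum; apply: eq_bigr => k _.
by rewrite hornerZ hornerXn.
Qed.

Lemma qform_wdeg (p : {poly {poly R}}) A1 A2 B i j : (qform p A1 A2 B)`_j`_i != 0 ->
  wdeg A1 A2 (i, j) = B.
Proof.
rewrite /qform coef_poly; case: ifP => _; last by rewrite coef0 => /eqP.
rewrite coef_poly; case: ifP => _; last by move=> /eqP.
by case: (wdeg A1 A2 (i, j) =P B) => // _ /eqP.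
Qed.

Lemma max_attained (T : eqType) (s : seq T) (F : T -> nat) k0 :
  k0 \in s -> exists2 k, k \in s & \max_(k <- s) F k = F k.
Proof.
elim: s k0 => // a s IH k0 _; rewrite big_cons.
case: (boolP (s == [::])) => [/eqP -> | ].
  by exists a; rewrite ?mem_head // big_nil maxn0.
case: s IH => // b s IH _.
have [k ks ->] := IH b (mem_head _ _).
case: (leqP (F a) (F k)) => h.
  by exists k; rewrite // in_cons ks orbT.
by exists a; rewrite ?mem_head.
Qed.

Lemma max_const (T : eqType) (s : seq T) (P : pred T) (F : T -> nat) c k0 :
  k0 \in s -> P k0 -> (forall k, k \in s -> P k -> F k = c) ->
  \max_(k <- s | P k) F k = c.
Proof.
move=> k0s Pk0 h; apply/eqP; rewrite eqn_leq; apply/andP; split.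
  by apply/bigmax_leqP_seq => i si Pi; rewrite h.
by rewrite -(h k0 k0s Pk0); apply: leq_bigmax_seq.
Qed.

Lemma qform_fact (p : {poly {poly R}}) A1 A2 B (x y : R) : (0 < A1)%N -> (0 < A2)%N -> coprime A1 A2 ->
  x != 0 -> y != 0 ->
  eval2 (qform p A1 A2 B) x y = x ^+ gamma1 (qform p A1 A2 B) * y ^+ eta1 (qform p A1 A2 B)
     * (charpoly (qform p A1 A2 B) A2).[x ^- A2 * y ^+ A1].
Proof.
move=> A1p A2p cop xn yn.
set f := qform p A1 A2 B.
rewrite eval2_supp charpoly_eval mulr_sumr big_seq [RHS]big_seq.
apply: eq_bigr => k ks.
have wd : forall k, k \in supp2 f -> (A1 * k.1 + A2 * k.2 = B)%N.
  by move=> [i j] /supp_nz /qform_wdeg.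
have [k' k's gm] := max_attained (fun k : nat * nat => k.1) ks.
have gmE : gamma1 f = k'.1 by [].
have etE : eta1 f = k'.2.
  apply: (max_const (k0 := k')) => //=; first by rewrite gmE.
  move=> k'' k''s /eqP e''; move: (wd _ k''s) (wd _ k's); rewrite e'' gmE => h1 h2.
  apply/eqP; rewrite -(eqn_pmul2l A2p); apply/eqP; apply: (@addnI (A1 * k'.1)); by rewrite h1 h2.
have kle : (k.1 <= k'.1)%N by rewrite -gmE; apply: (leq_bigmax_seq (F := fun k : nat * nat => k.1)).
have hk := wd _ ks; have hk' := wd _ k's.
have m1 : (A1 * k.1 <= A1 * k'.1)%N by rewrite leq_mul2l kle orbT.
have h : (A1 * (k'.1 - k.1) + A2 * k'.2 = A2 * k.2)%N by rewrite mulnBr; lia.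
have ele : (k'.2 <= k.2)%N by rewrite -(leq_pmul2l A2p) -h leq_addl.
have m2 : (A2 * k'.2 <= A2 * k.2)%N by rewrite leq_mul2l ele orbT.
have h2 : (A1 * (k'.1 - k.1) = A2 * (k.2 - k'.2))%N by rewrite !mulnBr; lia.
have dv : (A2 %| k'.1 - k.1)%N.
  have cop' : coprime A2 A1 by rewrite coprime_sym.
  by rewrite -(Gauss_dvdr _ cop') h2 dvdn_mulr.
set m := ((gamma1 f - k.1) %/ A2)%N.
have gE : (k'.1 = k.1 + A2 * m)%N by rewrite /m gmE mulnC divnK //; lia.
have kE : (k.2 = k'.2 + A1 * m)%N.
  have : (A2 * (k.2 - k'.2) = A2 * (A1 * m))%N by rewrite -h2 gE addKn mulnCA.
  move/eqP; rewrite eqn_pmul2l // => /eqP; lia.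
rewrite gmE etE gE kE !exprD exprMn exprVn -!exprM.
have X0 : x ^+ (A2 * m) != 0 by rewrite expf_neq0.
move: (f`_(k'.2 + A1 * m)`_k.1) (x ^+ k.1) (y ^+ k'.2) (y ^+ (A1 * m)) X0.
move: (x ^+ (A2 * m)) => X c a b Y X0.
rewrite -[LHS]mulr1 -(mulfV X0).
move: (X^-1) => Z; ring.
Qed.
End S.

Unset Implicit Arguments.
Set Strict Implicit.
Theorem corollary1 (R : realType) (p : {poly {poly R}}) (A1 A2 : nat) :
  coef2 p 0 0 = 0 ->
  coef2 p 1 0 = 0 -> coef2 p 0 1 = 0 ->
  hull_dim2 p ->
  (forall B1 B2 : nat, (0 < B1)%N -> (0 < B2)%N ->
     forall x y : R, 0 <= eval2 (mainform p B1 B2) x y) ->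
  inAp p A1 A2 ->
  (forall u0 : R, Up p A1 A2 u0 -> (gA p A1 A2 2).[u0] != 0) ->
  let chi1 := gamma1 (phi p A1 A2 2) in
  let eta := eta1 (phi p A1 A2 2) in
  (forall x y : R, eval2 (phi p A1 A2 1) x y = 0 -> x != 0 -> y != 0 ->
       0 < eval2 (phi p A1 A2 2) x y)
  <->
  (forall u0 : R, Up p A1 A2 u0 ->
     ~ exists x y : R, [/\ x != 0, y != 0, x ^- A2 * y ^+ A1 = u0 &
                          x ^+ chi1 * y ^+ eta * (gA p A1 A2 2).[u0] < 0]).

Proof.
move=> _ _ _ _ _ [/and3P [A1p A2p cop] _ _ _] hg chi1 eta.
have Fi i (x y : R) : x != 0 -> y != 0 -> eval2 (phi p A1 A2 i) x y =
   x ^+ gamma1 (phi p A1 A2 i) * y ^+ eta1 (phi p A1 A2 i)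
   * (gA p A1 A2 i).[x ^- A2 * y ^+ A1].
  by move=> xn yn; apply: qform_fact.
split.
- move=> H u0 Uu0 [x [y [xn yn ue neg]]].
  have := H x y; rewrite (Fi 1%N) // ue (rootP Uu0) mulr0 => /(_ erefl xn yn).
  rewrite (Fi 2%N) // ue -/chi1 -/eta => pos.
  by have := lt_trans neg pos; rewrite ltxx.
- move=> H x y e0 xn yn.
  rewrite (Fi 1%N) // in e0.
  have r : Up p A1 A2 (x ^- A2 * y ^+ A1).
    move/eqP: e0; rewrite mulf_eq0 (negbTE (mulf_neq0 (expf_neq0 _ xn) (expf_neq0 _ yn))) /=.
    by [].
  rewrite (Fi 2%N) // -/chi1 -/eta.
  have nz : x ^+ chi1 * y ^+ eta * (gA p A1 A2 2).[x ^- A2 * y ^+ A1] != 0.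
    by rewrite !mulf_neq0 ?expf_neq0 // hg.
  rewrite lt_neqAle eq_sym nz /= leNgt; apply/negP => neg.
  by apply: (H _ r); exists x, y; split.
Qed.
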